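(* Let $\mathcal A=[m]$, $1\le k\le m$, $\mathcal E=2^{\mathcal A}$. Then $$\sqrt{\tfrac{2}{\pi}}\cdot\frac{2^{2^m}}{2^m\cdot m!}\le\mathrm{Ndim}(\mathcal F_{\mathrm{sGST}})\le2^{2^m}\log(k+2).$$
   Context: $\mathcal A_k$ is the set of $k$-subsets of $\mathcal A$. Profiles are $P\in\mathcal E^n$, $n\ge1$; $\mathrm{Hist}(P)\in\mathbb Z_{\ge0}^{\mathcal E}$ counts occurrences. For $G\subseteq\mathcal E$, $\vec w_G$ is its indicator vector; $\vec1$ the all-ones vector. For $\tau:\mathcal A_k\times2^{\mathcal E}\to\{0,\dots,k+1\}$, $\mathrm{GST}_\tau$ maps $P$ to the set of $W\in\mathcal A_k$ with $\left(\vec w_G-\frac{\tau(W,G)}{k}\vec1\right)\cdot\mathrm{Hist}(P)<0$ for all $G\subseteq\mathcal E$. $\mathrm{GST}_\tau$ is symmetric if for every permutation $\sigma$ of $\mathcal A$, every $W\in\mathcal A_k$ and $G\subseteq\mathcal E$, $\tau(W,G)=\tau(\sigma(W),\sigma(G))$, where $\sigma(G)=\{\sigma(A):A\in G\}$. $\mathcal F_{\mathrm{sGST}}$ is the set of all symmetric GST axioms. Natarajan dimension: a finite set of profiles $\mathcal P$ is shattered by $\mathcal F$ if there are $f^0,f^1$ with $f^0(P)\ne f^1(P)$ on $\mathcal P$ such that for every $B\subseteq\mathcal P$ some $f\in\mathcal F$ equals $f^0$ on $B$ and $f^1$ on $\mathcal P\setminus B$; $\mathrm{Ndim}$ is the largest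 size of a shattered set. Logarithms are base 2. *)

(* Defs.v *)
From mathcomp Require Import all_boot all_fingroup all_algebra.
Set Implicit Arguments. Unset Strict Implicit. Unset Printing Implicit Defensive.
Import GRing.Theory Num.Theory.

(* A profile is a finite sequence of elements of E (length n >= 1 imposed where used). *)
Definition profile (m : nat) := seq {set 'I_m}.

Definition hist (m : nat) (P : profile m) : {ffun {set 'I_m} -> nat} :=
  [ffun e => count_mem e P].

Definition wvec (m : nat) (G : {set {set 'I_m}}) : {ffun {set 'I_m} -> rat} :=
  [ffun e => (((e \in G) : nat)%:R)%R].

Definition GST (m k : nat) (tau : {set 'I_m} -> {set {set 'I_m}} -> nat)
    (P : profile m) : {set {set 'I_m}} :=
  [set W : {set 'I_m} | (#|W| == k) &&
     [forall G : {set {set 'I_m}},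
        (\sum_(e : {set 'I_m}) (wvec G e - (tau W G)%:R / k%:R) * (hist P e)%:R
           < (0 : rat))%R]].

(* tau : A_k x 2^E -> {0,..,k+1}, symmetric under permutations of A.
   Only values on k-subsets W matter (tau is a function on A_k). *)
Definition sym_tau (m k : nat) (tau : {set 'I_m} -> {set {set 'I_m}} -> nat) : Prop :=
  (forall (W : {set 'I_m}) (G : {set {set 'I_m}}), #|W| = k -> tau W G <= k.+1) /\
  (forall (s : {perm 'I_m}) (W : {set 'I_m}) (G : {set {set 'I_m}}), #|W| = k ->
     tau W G = tau (s @: W) [set (s @: e) | e : {set 'I_m} in G]).

(* A finite set of profiles (a duplicate-free list of nonempty profiles) shattered
   by F_sGST (Natarajan). Subsets B of the set are given by boolean predicates. *)
Definition sGST_shattered (m k : nat) (S : seq (profile m)) : Prop :=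
  uniq S /\ all (fun P => 0 < size P) S /\
  exists f0 f1 : profile m -> {set {set 'I_m}},
    (forall P, P \in S -> f0 P != f1 P) /\
    forall B : profile m -> bool,
      exists tau, sym_tau k tau /\
        forall P, P \in S -> GST k tau P = (if B P then f0 P else f1 P).

Definition sGST_Ndim_is (m k d : nat) : Prop :=
  (exists S : seq (profile m), sGST_shattered k S /\ size S = d) /\
  (forall S : seq (profile m), sGST_shattered k S -> size S <= d).

(* Main.v *)
Require Import Defs.
From mathcomp Require Import all_boot.
From Stdlib Require Import Reals.
From mathcomp Require all_fingroup all_algebra lra zify.
From Stdlib Require ClassicalEpsilon Classical.

Module Helpers.
From mathcomp Require Import all_fingroup all_algebra.
From mathcomp Require Import lra zify.
From Stdlib Require Import ClassicalEpsilon Classical.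
Set Implicit Arguments. Unset Strict Implicit. Unset Printing Implicit Defensive.
Import GRing.Theory Num.Theory.

Section Act.
Variable m : nat.
Definition sact (s : {perm 'I_m}) (X : {set {set 'I_m}}) : {set {set 'I_m}} :=
  [set (s @: e) | e : {set 'I_m} in X].

Lemma actM s t X : sact s (sact t X) = sact (t * s)%g X.
Proof.
rewrite /sact -imset_comp; apply: eq_imset => e /=.
rewrite -imset_comp; apply: eq_imset => x /=; by rewrite permM.
Qed.

Lemma act1 X : sact 1%g X = X.
Proof.
rewrite /sact -[RHS]imset_id; apply: eq_imset => e /=.
rewrite -[RHS]imset_id; apply: eq_imset => x /=; by rewrite perm1.
Qed.

Lemma card_act s X : #|sact s X| = #|X|.
Proof. apply: card_imset; apply: imset_inj; exact: perm_inj. Qed.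

Definition orb (X Y : {set {set 'I_m}}) := [exists s : {perm 'I_m}, Y == sact s X].

Lemma orb_refl X : orb X X.
Proof. apply/existsP; exists 1%g; by rewrite act1. Qed.

Lemma orb_sym X Y : orb X Y -> orb Y X.
Proof.
move/existsP=> [s /eqP ->]; apply/existsP; exists (s^-1)%g.
by rewrite actM mulgV act1.
Qed.

Lemma orb_trans X Y Z : orb X Y -> orb Y Z -> orb X Z.
Proof.
move/existsP=> [s /eqP ->]; move/existsP=> [t /eqP ->]; apply/existsP; exists (s * t)%g.
by rewrite actM.
Qed.

Lemma orb_card X Y : orb X Y -> #|Y| = #|X|.
Proof. by move/existsP=> [s /eqP ->]; rewrite card_act. Qed.

Lemma orb_act X s : orb X (sact s X).
Proof. by apply/existsP; exists s. Qed.

Lemma perm_trans_set (n : nat) : forall W W0 : {set 'I_m}, #|W :\: W0| <= n ->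
  #|W| = #|W0| -> exists s : {perm 'I_m}, s @: W = W0.
Proof.
elim: n => [|n IH] W W0 Hd Hc.
  exists 1%g.
  have HW : W \subset W0 by rewrite -setD_eq0 -cards_eq0; case: #|_| Hd.
  have -> : W = W0 by apply/eqP; rewrite eqEcard HW Hc leqnn.
  rewrite -[RHS]imset_id; apply: eq_imset => x; by rewrite perm1.
case: (posnP #|W :\: W0|) => Hn0'.
  by apply: (IH _ _ _ Hc); rewrite Hn0'.
have [x Hx] : exists x, x \in W :\: W0 by apply/set0Pn; rewrite -card_gt0.
have [y Hy] : exists y, y \in W0 :\: W.
  apply/set0Pn; rewrite -card_gt0 lt0n cards_eq0 setD_eq0; apply/negP => H.
  have : W0 = W by apply/eqP; rewrite eqEcard H Hc leqnn.
  move=> E; move: Hx; by rewrite E setDv inE.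
move: (Hx) (Hy); rewrite !inE => /andP [xW0 xW] /andP [yW yW0].
set t := tperm x y.
set W' := t @: W.
have sub : W' :\: W0 \subset (W :\: W0) :\ x.
  apply/subsetP => z; rewrite !inE => /andP [zW0 /imsetP [w wW Ez]].
  subst z; move: zW0; rewrite /t; case: tpermP => [Hw|Hw|Hxw Hyw].
  - by rewrite yW0.
  - by move: wW; rewrite Hw (negbTE yW).
  - move=> H; rewrite H wW !andbT; exact/eqP.
have Hlt : #|W' :\: W0| <= n.
  have E := cardsD1 x (W :\: W0); rewrite Hx add1n in E.
  apply: leq_trans (subset_leq_card sub) _; by rewrite -ltnS -E.
have [s Hs] := IH W' W0 Hlt (etrans (card_imset _ (@perm_inj _ t)) Hc).
exists (t * s)%g; rewrite -Hs /W' -imset_comp; apply: eq_imset => z /=; by rewrite permM.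
Qed.

Lemma perm_set_trans (W W0 : {set 'I_m}) : #|W| = #|W0| -> exists s : {perm 'I_m}, s @: W = W0.
Proof. by apply: (@perm_trans_set #|W :\: W0|). Qed.

End Act.

Lemma exists_ksub m k : k <= m -> exists W : {set 'I_m}, #|W| = k.
Proof.
move=> km.
have : 0 < #|[set A : {set 'I_m} | #|A| == k]| by rewrite card_draws card_ord bin_gt0.
by rewrite card_gt0 => /set0Pn [W]; rewrite inE => /eqP HW; exists W.
Qed.

Lemma GST_ext m k (t1 t2 : {set 'I_m} -> {set {set 'I_m}} -> nat) :
  (forall (W : {set 'I_m}) G, #|W| = k -> t1 W G = t2 W G) -> forall P, GST k t1 P = GST k t2 P.
Proof.
move=> H P; apply/setP => W; rewrite !inE.
case: eqP => //= HW; apply: eq_forallb => G; by rewrite H.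
Qed.

Lemma shattered_bound m k (S : seq (profile m)) : 0 < k -> k <= m ->
  sGST_shattered k S -> expn 2 (size S) <= expn k.+2 #|{set {set 'I_m}}|.
Proof.
move=> k0 km [uS [allS [f0 [f1 [hneq hB]]]]].
have [W0 HW0] := exists_ksub km.
set d := size S.
pose Bof (b : {ffun 'I_d -> bool}) (P : profile m) := oapp b false (insub (index P S) : option 'I_d).
have ch : forall b : {ffun 'I_d -> bool}, {tau | sym_tau k tau /\ forall P, P \in S ->
   GST k tau P = (if Bof b P then f0 P else f1 P)}.
  move=> b; apply: constructive_indefinite_description; exact: hB.
pose g (b : {ffun 'I_d -> bool}) : {ffun {set {set 'I_m}} -> 'I_(k.+2)} :=
  [ffun G => inord (proj1_sig (ch b) W0 G)].
have ginj : injective g.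
  move=> b1 b2 Hg.
  move: Hg; rewrite /g.
  case: (ch b1) => [t1 [[bd1 sy1] H1]]; case: (ch b2) => [t2 [[bd2 sy2] H2]] /= Hg.
  have E0 : forall G, t1 W0 G = t2 W0 G.
    move=> G; have := congr1 (fun f : {ffun {set {set 'I_m}} -> 'I_(k.+2)} => val (f G)) Hg; rewrite /= !ffunE /=.
    by rewrite !inordK // ltnS ?bd1 ?bd2.
  have E : forall (W : {set 'I_m}) G, #|W| = k -> t1 W G = t2 W G.
    move=> W G HW.
    have [s Hs] := perm_set_trans (etrans HW (esym HW0)).
    by rewrite (sy1 s) // (sy2 s) // Hs E0.
  apply/ffunP => i.
  have iS : i < size S by [].
  set P := nth [::] S i.
  have PS : P \in S by apply: mem_nth.
  have iP : (insub (index P S) : option 'I_d) = Some i by rewrite /P index_uniq // valK.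
  have := H1 P PS; rewrite (GST_ext E) H2 // /Bof iP /=.
  have := hneq P PS.
  by case: (b1 i); case: (b2 i) => // /negbTE ne E1; move: ne; rewrite E1 eqxx.
have := leq_card g ginj.
by rewrite !card_ffun card_bool !card_ord.
Qed.
Section P3.
Local Open Scope ring_scope.

Lemma sum_hist m (c : {set 'I_m} -> rat) (P : profile m) :
  \sum_(e : {set 'I_m}) c e * (hist P e)%:R = \sum_(x <- P) c x.
Proof.
elim: P => [|x P IH].
  rewrite big_nil big1 // => e _; by rewrite ffunE mulr0.
rewrite big_cons -IH -[RHS]addrC.
under eq_bigr => e _ do rewrite ffunE /= natrD mulrDr.
rewrite big_split /= addrC; congr (_ + _).
  by apply: eq_bigr => e _; rewrite ffunE.
rewrite (bigD1 x) //= eqxx mulr1 big1 ?addr0 // => e /negbTE; rewrite eq_sym => ->.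
by rewrite mulr0.
Qed.

Lemma neg_sum (T : eqType) (s : seq T) (f : T -> rat) :
  (forall x, x \in s -> f x <= 0) -> (exists2 x, x \in s & f x < 0) ->
  \sum_(x <- s) f x < 0.
Proof.
elim: s => [|y s IH] H [x xs fx]; first by [].
rewrite big_cons.
have Hy : f y <= 0 by apply: H; rewrite inE eqxx.
have Hs : forall z, z \in s -> f z <= 0 by move=> z zs; apply: H; rewrite inE zs orbT.
move: xs; rewrite inE => /orP [/eqP Exy|xs].
  subst x; have : \sum_(z <- s) f z <= 0.
    rewrite big_seq; apply: sumr_le0 => z; exact: Hs.
  move=> ?; lra.
have := IH Hs (ex_intro2 _ _ x xs fx); move=> ?; lra.
Qed.

Lemma zero_sum (T : eqType) (s : seq T) (f : T -> rat) :
  (forall x, x \in s -> f x = 0) -> \sum_(x <- s) f x = 0.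
Proof. by move=> H; rewrite big_seq big1 // => x; apply: H. Qed.

End P3.
Lemma construct (m k s0 : nat) : 0 < k -> k <= m -> 0 < s0 ->
  exists S : seq (profile m), sGST_shattered k S /\
    #|[set X : {set {set 'I_m}} | #|X| == s0]| <= m`! * size S.
Proof.
move=> k0 km s0pos.
have [W0 HW0] := exists_ksub km.
pose L := [set X : {set {set 'I_m}} | #|X| == s0].
pose rep (X : {set {set 'I_m}}) := odflt X [pick Y | orb Y X].
have rep_orb (X : {set {set 'I_m}}) : orb (rep X) X.
  rewrite /rep; case: pickP => [Y HY|_] //=; exact: orb_refl.
have rep_eq (X Y : {set {set 'I_m}}) : orb X Y -> rep X = rep Y.
  move=> H; rewrite /rep (@eq_pick _ (fun Z => orb Z X) (fun Z => orb Z Y)); last first.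
    move=> Z; apply/idP/idP => HZ; [exact: orb_trans HZ H | exact: orb_trans HZ (orb_sym H)].
  case: pickP => //= H0; by have := H0 Y; rewrite orb_refl.
pose R := rep @: L.
have repR (r : {set {set 'I_m}}) : r \in R -> rep r = r.
  by move/imsetP => [X _ ->]; apply: rep_eq; apply: rep_orb.
have Rcard (r : {set {set 'I_m}}) : r \in R -> #|r| = s0.
  move/imsetP => [X XL ->]; rewrite -(orb_card (rep_orb X)).
  by rewrite inE in XL; apply/eqP.
have Rdist (r1 r2 : {set {set 'I_m}}) : r1 \in R -> r2 \in R -> orb r1 r2 -> r1 = r2.
  by move=> H1 H2 H; rewrite -(repR r1) // -(repR r2) //; apply: rep_eq.
have cardL : #|L| <= m`! * #|R|.
  have sub : L \subset (fun p : {perm 'I_m} * {set {set 'I_m}} => sact p.1 p.2) @: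
      setX [set: {perm 'I_m}] R.
    apply/subsetP => X XL; have := rep_orb X; move/existsP => [s /eqP HX].
    apply/imsetP; exists (s, rep X) => //; rewrite inE /= inE; by rewrite imset_f.
  apply: leq_trans (subset_leq_card sub) _; apply: leq_trans (leq_imset_card _ _) _.
  by rewrite cardsX cardsT card_Sn.
pose S := map (fun X : {set {set 'I_m}} => enum X) (enum R).
exists S; split; last by rewrite size_map -cardE.
split.
  rewrite map_inj_uniq ?enum_uniq //; move=> X Y H; apply/setP => x; by rewrite -mem_enum H mem_enum.
split.
  apply/allP => P /mapP [r rR ->]; rewrite mem_enum in rR; by rewrite -cardE Rcard.
exists (fun _ => [set W : {set 'I_m} | #|W| == k]), (fun _ => set0).
split.
  move=> P _; apply/set0Pn; exists W0; by rewrite inE HW0.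
move=> B.
pose tau (W : {set 'I_m}) (G : {set {set 'I_m}}) :=
  if [exists r in R, ~~ B (enum r) && orb r G] then k else k.+1.
exists tau; split.
  split.
    by move=> W G _; rewrite /tau; case: ifP => _ //; exact: leqnSn.
  move=> s W G _; rewrite /tau; congr (if _ then _ else _); apply: eq_existsb => r.
  congr (_ && (_ && _)).
  change (orb r G = orb r (sact s G)).
  apply/idP/idP => H; [exact: orb_trans H (orb_act G s) | exact: orb_trans H (orb_sym (orb_act G s))].
have kne : (k%:R : rat) != 0%R by rewrite pnatr_eq0 -lt0n.
move=> P /mapP [r0 r0R ->]; rewrite mem_enum in r0R.
case HB: (B (enum r0)).
- apply/setP => W; rewrite !inE; case: eqP => //= HW; apply/forallP => G.
  rewrite sum_hist.
  have [x0 x0r0] : exists x, x \in r0 by apply/set0Pn; rewrite -card_gt0 Rcard.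
  have wle y : (wvec G y <= 1)%R by rewrite ffunE; case: (y \in G).
  rewrite /tau; case: ifP => Hex.
    have [x xr xG] : exists2 x, x \in enum r0 & x \notin G.
      move/existsP: Hex => [r /andP [rR /andP [nB rG]]].
      case: (boolP (r0 \subset G)) => Hsub; last first.
        have [x xr0 xG] := subsetPn Hsub; exists x => //; by rewrite mem_enum.
      have EG : r0 = G by apply/eqP; rewrite eqEcard Hsub (orb_card rG) (Rcard _ rR) (Rcard _ r0R) leqnn.
      subst G; have Er := Rdist _ _ rR r0R rG; subst r; by rewrite HB in nB.
    apply: neg_sum.
      move=> y _; rewrite divff //; have := wle y; lra.
    exists x => //; rewrite ffunE (negbTE xG) /= divff //; lra.
  have Hk : (1 < (k.+1)%:R / k%:R :> rat)%R by rewrite ltr_pdivlMr ?ltr0n // mul1r ltr_nat.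
  apply: neg_sum.
    move=> y _; have := wle y; lra.
  exists x0; first by rewrite mem_enum.
  have := wle x0; lra.
- apply/setP => W; rewrite !inE; apply/negbTE; rewrite negb_and; case: eqP => //= HW.
  rewrite negb_forall; apply/existsP; exists r0; rewrite sum_hist /tau.
  have -> : [exists r in R, ~~ B (enum r) && orb r r0].
    by apply/existsP; exists r0; rewrite r0R HB orb_refl.
  rewrite zero_sum ?ltxx // => x; rewrite mem_enum => xr; by rewrite ffunE xr divff ?subrr.
Qed.



Lemma bin_step n i : i.+1 <= n - i -> 'C(n, i) <= 'C(n, i.+1).
Proof.
move=> H; rewrite -(@leq_pmul2l i.+1) // mul_bin_left; exact: leq_mul.
Qed.

Lemma bin_up n i : i <= n./2 -> 'C(n, i) <= 'C(n, n./2).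
Proof.
have Hn := odd_double_half n.
move=> H; rewrite -(subnK H).
have : n./2 - i + i <= n./2 by rewrite subnK.
elim: (n./2 - i) => [|j IH] // Hj.
apply: leq_trans (IH _) _; first lia.
rewrite addSn; apply: bin_step; lia.
Qed.

Lemma bin_half n i : 'C(n, i) <= 'C(n, n./2).
Proof.
have Hn := odd_double_half n.
case: (leqP i n./2) => H; first exact: bin_up.
case: (leqP i n) => H2; last by rewrite bin_small.
rewrite -bin_sub //; apply: bin_up; lia.
Qed.

Lemma two_pow_le n : 2 <= n -> expn 2 n <= n * 'C(n, n./2).
Proof.
move=> n2.
have -> : expn 2 n = \sum_(i < n.+1) 'C(n, i).
  rewrite -[2]/(1 + 1) expnDn; apply: eq_bigr => i _; by rewrite !exp1n !muln1.
case: n n2 => [|[|p]] // _.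
rewrite big_ord_recl big_ord_recr /= bin0 binn.
set M := 'C(p.+2, p.+2./2).
have HM : p.+2 <= M by rewrite -{1}[p.+2]bin1 bin_half.
have : \sum_(i < p.+1) 'C(p.+2, (lift ord0 (widen_ord (leqnSn _) i))) <= \sum_(i < p.+1) M.
  by apply: leq_sum => i _; apply: bin_half.
rewrite sum_nat_const card_ord /=.
lia.
Qed.

End Helpers.
Import Helpers.
From Stdlib Require Import Classical.
Set Implicit Arguments. Unset Strict Implicit. Unset Printing Implicit Defensive.

From Stdlib Require Import Lra.

Lemma max_exists (P : nat -> Prop) B : P 0 -> (forall n, P n -> n <= B) ->
  exists d, P d /\ forall n, P n -> n <= d.
Proof.
elim: B => [|B IH] H0 HB.
  by exists 0; split => // n /HB.
case: (classic (P B.+1)) => HP.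
  by exists B.+1; split.
apply: IH => // n Pn; have := HB n Pn; rewrite leq_eqVlt => /orP [/eqP E|] //.
by subst n.
Qed.

Lemma INR_expn a b : INR (expn a b) = (INR a ^ b)%R.
Proof.
elim: b => [|b IH] //; by rewrite expnS -multE mult_INR IH.
Qed.

Lemma pow_expn a b : Nat.pow a b = expn a b.
Proof. elim: b => [|b IH] //=; by rewrite expnS IH multE. Qed.

Lemma fact_eq n : n`! = Factorial.fact n.
Proof. elim: n => [|n IH] //=; by rewrite factS IH -multE. Qed.

Lemma card_setT' (T : finType) : #|{set T}| = expn 2 #|T|.
Proof. by have := card_powerset [set: T]; rewrite powersetT !cardsT. Qed.

Theorem theorem10 (m k : nat) :
  (1 <= k)%N -> (k <= m)%N ->
  exists d : nat, sGST_Ndim_is m k d /\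
    (sqrt (2 / PI) * (2 ^ (2 ^ m)) / (2 ^ m * INR (Factorial.fact m)) <= INR d)%R /\
    (INR d <= 2 ^ (2 ^ m) * (ln (INR k + 2) / ln 2))%R.
Proof.
move=> k0 km.
set N := #|{set 'I_m}|.
have HN : N = expn 2 m by rewrite /N card_setT' card_ord.
set M := #|{set {set 'I_m}}|.
have HM : M = expn 2 N by rewrite /M card_setT'.
pose Q d := exists S : seq (profile m), sGST_shattered k S /\ size S = d.
have Q0 : Q 0.
  exists [::]; split => //; split => //; split => //.
  exists (fun _ => set0), (fun _ => set0); split => // B.
  by exists (fun _ _ => 0); split.
have QB : forall n, Q n -> n <= expn k.+2 M.
  move=> n [S [HS <-]]; apply: leq_trans (ltnW (ltn_expl _ (leqnn 2))) (shattered_bound k0 km HS).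
have [d [[S [HS HSd]] Hmax]] := max_exists Q0 QB.
exists d; split.
  split; [by exists S | move=> S' HS'; apply: (Hmax); by exists S'].
have Hup : expn 2 d <= expn k.+2 M by rewrite -HSd; apply: shattered_bound.
have m1 : 0 < m by apply: leq_trans km.
have N2 : 2 <= N by rewrite HN -{1}(expn1 2) leq_exp2l.
have h2 : 0 < N./2 by rewrite half_gt0.
have [S2 [HS2 HL]] := construct (m:=m) (s0:=N./2) k0 km h2.
have HS2d : size S2 <= d by apply: (Hmax); exists S2.
have Hlow : expn 2 N <= N * (m`! * d).
  apply: leq_trans (two_pow_le N2) _; rewrite leq_mul2l; apply/orP; right.
  rewrite card_draws in HL; apply: leq_trans HL _; by rewrite leq_mul2l HS2d orbT.
rewrite !pow_expn -HN.
have INR2 : INR 2 = 2%R by rewrite /=; lra.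
have INRN : INR N = (2 ^ m)%R by rewrite HN INR_expn INR2.
have INRM : INR M = (2 ^ N)%R by rewrite HM INR_expn INR2.
have Hk2 : INR k.+2 = (INR k + 2)%R by rewrite !S_INR; lra.
have Hlow' : (2 ^ N <= 2 ^ m * INR (Factorial.fact m) * INR d)%R.
  have := le_INR _ _ (elimT leP Hlow).
  rewrite INR_expn INR2 -!multE !mult_INR INRN fact_eq => H; lra.
have Hup' : (2 ^ d <= (INR k + 2) ^ M)%R.
  have := le_INR _ _ (elimT leP Hup); by rewrite !INR_expn INR2 Hk2.
split.
  have PIgt : (2 < PI)%R by have := PI2_1; lra.
  have s1 : (sqrt (2 / PI) <= 1)%R.
    rewrite -sqrt_1; apply: sqrt_le_1_alt.
    have : (/ PI <= / 2)%R by apply: Rinv_le_contravar; lra.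
    have : (2 * / 2 = 1)%R by apply: Rinv_r; lra.
    rewrite /Rdiv => H1 H2; have := Rmult_le_compat_l 2 _ _ (ltac:(lra) : (0 <= 2)%R) H2; lra.
  have s0 : (0 <= sqrt (2/PI))%R by apply: sqrt_pos.
  have b0 : (0 < 2 ^ m * INR (Factorial.fact m))%R.
    apply: Rmult_lt_0_compat; [apply: pow_lt; lra | apply: INR_fact_lt_0].
  have a0 : (0 <= 2 ^ N)%R by apply: pow_le; lra.
  set b := (2 ^ m * INR (Factorial.fact m))%R in Hlow' b0 *.
  rewrite /Rdiv; apply: (Rmult_le_reg_r b) => //.
  rewrite Rmult_assoc Rinv_l; last lra.
  rewrite Rmult_1_r; apply: Rle_trans (_ : 1 * 2 ^ N <= _)%R.
    by apply: Rmult_le_compat_r.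
  lra.
have l2 : (0 < ln 2)%R by have := ln_lt_2; lra.
have Hln : (INR d * ln 2 <= 2 ^ N * ln (INR k + 2))%R.
  rewrite -ln_pow; last lra.
  rewrite -INRM -ln_pow; last by have := pos_INR k; lra.
  case: (Rle_lt_or_eq_dec _ _ Hup') => H.
    apply: Rlt_le; apply: ln_increasing => //; apply: pow_lt; lra.
  rewrite H; apply: Rle_refl.
apply: (Rmult_le_reg_r (ln 2)) => //.
rewrite /Rdiv Rmult_assoc Rmult_assoc Rinv_l; last lra.
rewrite Rmult_1_r; exact: Hln.
Qed.
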